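(* (i) For every number $N\ge 2$ of qubits, there is no unextendible product basis of $(\mathbb{C}^2)^{\otimes N}$ that is unextendible across every bipartition. (ii) For $N\ge 3$ qubits, there exists an unextendible entangled basis of $(\mathbb{C}^2)^{\otimes N}$, consisting of genuinely multipartite entangled states, whose unextendibility is conserved across every bipartition.
   Context: Consider $N$ qubits held by $N$ parties. A bipartition is a split of the parties into two nonempty groups, viewing the space as a bipartite space $\mathbb{C}^{2^{k}}\otimes\mathbb{C}^{2^{N-k}}$. An unextendible product basis (UPB) is a set of mutually orthogonal fully product pure states spanning a proper subspace whose orthogonal complement contains no fully product state; it is unextendible across every bipartition if, for every bipartition, the orthogonal complement contains no pure state that is a product state with respect to that bipartition. An unextendible entangled basis (UEB) is a set of mutually orthogonal pure entangled states spanning a proper subspace; its unextendibility is conserved across every bipartition if, for every bipartition, the orthogonal complement of its span contains no pure state that is entangled with respect to that bipartition (equivalently, every pure state in the complement is fully separable). A pure state is genuinely multipartite entangled if it is not a product state with respect to any bipartition. *)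

(* Defs.v *)
From HB Require Import structures.
From mathcomp Require Import all_boot all_order all_algebra.
From mathcomp Require Import complex.
From mathcomp Require Import reals.
Set Implicit Arguments. Unset Strict Implicit. Unset Printing Implicit Defensive.
Import Order.TTheory GRing.Theory Num.Theory.
Local Open Scope ring_scope.
Local Open Scope complex_scope.

(* Computational basis of (C^2)^{\otimes N}: bit strings x : {ffun 'I_N -> bool}.
   A vector of (C^2)^{\otimes N} is its coordinate function on this basis. *)
Definition basis_idx (N : nat) := {ffun 'I_N -> bool}.
Definition vec (R : realType) (N : nat) := basis_idx N -> R[i].

Definition inner (R : realType) (N : nat) (u v : vec R N) : R[i] :=
  \sum_(x : basis_idx N) (u x)^* * v x.

Definition orthogonal (R : realType) (N : nat) (u v : vec R N) : Prop :=
  inner u v = 0.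

(* A pure state is (represented by) a nonzero vector. *)
Definition nonzero (R : realType) (N : nat) (v : vec R N) : Prop :=
  exists x, v x != 0.

Definition fully_product (R : realType) (N : nat) (v : vec R N) : Prop :=
  nonzero v /\
  exists a : 'I_N -> bool -> R[i], forall x : basis_idx N, v x = \prod_(i < N) a i (x i).

Definition bipartition (N : nat) (S : {set 'I_N}) : Prop :=
  S != set0 /\ S != [set: 'I_N].

Definition depends_only_on (R : realType) (N : nat) (A : {set 'I_N}) (f : vec R N) : Prop :=
  forall x y : basis_idx N, (forall i, i \in A -> x i = y i) -> f x = f y.

Definition product_wrt (R : realType) (N : nat) (S : {set 'I_N}) (v : vec R N) : Prop :=
  nonzero v /\
  exists a b : vec R N, depends_only_on S a /\ depends_only_on (~: S) b /\
    forall x, v x = a x * b x.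

Definition entangled_wrt (R : realType) (N : nat) (S : {set 'I_N}) (v : vec R N) : Prop :=
  nonzero v /\ ~ product_wrt S v.

Definition entangled (R : realType) (N : nat) (v : vec R N) : Prop :=
  nonzero v /\ ~ fully_product v.

Definition GME (R : realType) (N : nat) (v : vec R N) : Prop :=
  nonzero v /\ forall S, bipartition S -> ~ product_wrt S v.

Definition mutually_orthogonal (R : realType) (N m : nat) (u : 'I_m -> vec R N) : Prop :=
  forall k l, k != l -> orthogonal (u k) (u l).

Definition in_span (R : realType) (N m : nat) (u : 'I_m -> vec R N) (v : vec R N) : Prop :=
  exists c : 'I_m -> R[i], forall x, v x = \sum_(k < m) c k * u k x.

Definition spans_proper_subspace (R : realType) (N m : nat) (u : 'I_m -> vec R N) : Prop :=
  exists v : vec R N, ~ in_span u v.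

Definition in_complement (R : realType) (N m : nat) (u : 'I_m -> vec R N) (w : vec R N) : Prop :=
  forall k, orthogonal (u k) w.

Definition UPB (R : realType) (N m : nat) (u : 'I_m -> vec R N) : Prop :=
  [/\ forall k, fully_product (u k),
      mutually_orthogonal u,
      spans_proper_subspace u &
      forall w, in_complement u w -> ~ fully_product w].

Definition unextendible_every_bipartition (R : realType) (N m : nat) (u : 'I_m -> vec R N) : Prop :=
  forall S : {set 'I_N}, bipartition S ->
    forall w, in_complement u w -> ~ product_wrt S w.

Definition UEB (R : realType) (N m : nat) (u : 'I_m -> vec R N) : Prop :=
  [/\ forall k, entangled (u k),
      mutually_orthogonal u,
      spans_proper_subspace u &
      forall w, in_complement u w -> ~ entangled w].

Definition UEB_conserved_every_bipartition (R : realType) (N m : nat) (u : 'I_m -> vec R N) : Prop :=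
  forall S : {set 'I_N}, bipartition S ->
    forall w, in_complement u w -> ~ entangled_wrt S w.

(* Main.v *)
Require Import Defs.
From mathcomp Require Import all_boot all_order all_algebra.
From mathcomp Require Import complex reals.
From mathcomp Require Import ring.
From Stdlib Require Import ClassicalEpsilon Classical.
Set Implicit Arguments. Unset Strict Implicit. Unset Printing Implicit Defensive.
Import Order.TTheory GRing.Theory Num.Theory.
Local Open Scope ring_scope.
Local Open Scope complex_scope.

Section Gen.
Variable R : realType.
Local Notation C := R[i].

Definition ip2 (p q : bool -> C) := (Num.conj (p false)) * q false + (Num.conj (p true)) * q true.

Lemma cJM (a b : C) : (Num.conj (a * b)) = (Num.conj a) * (Num.conj b). Proof. exact: rmorphM. Qed.
Lemma cJD (a b : C) : (Num.conj (a + b)) = (Num.conj a) + (Num.conj b). Proof. exact: rmorphD. Qed.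
Lemma cJB (a b : C) : (Num.conj (a - b)) = (Num.conj a) - (Num.conj b). Proof. exact: rmorphB. Qed.
Lemma cJN (a : C) : (Num.conj (- a)) = - (Num.conj a). Proof. exact: rmorphN. Qed.
Lemma cJ1 : (Num.conj (1 : C)) = 1. Proof. exact: rmorph1. Qed.
Lemma cJ0 : (Num.conj (0 : C)) = 0. Proof. exact: rmorph0. Qed.
Lemma cJn k : (Num.conj (k%:R : C)) = k%:R. Proof. exact: rmorph_nat. Qed.
Lemma cJV (a : C) : (Num.conj (a^-1)) = ((Num.conj a))^-1. Proof. exact: fmorphV. Qed.
Lemma cJsum (I : finType) (P : pred I) (F : I -> C) :
  (Num.conj (\sum_(i | P i) F i)) = \sum_(i | P i) (Num.conj (F i)).
Proof. exact: rmorph_sum. Qed.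

Lemma cJ_ge0 (z : C) : 0 <= (Num.conj z) * z.
Proof. by rewrite mulrC mul_conjC_ge0. Qed.

Lemma cJ_eq0 (z : C) : ((Num.conj z) * z == 0) = (z == 0).
Proof. by rewrite mulf_eq0 conjC_eq0 orbb. Qed.

Lemma ip2_self_neq0 (p : bool -> C) : (exists b, p b != 0) -> ip2 p p != 0.
Proof.
case=> b Hb; rewrite /ip2 paddr_eq0 ?cJ_ge0 // !cJ_eq0.
by case: b Hb => /negbTE ->; rewrite ?andbF.
Qed.

Lemma ip2_conj (p q : bool -> C) : ip2 q p = (Num.conj (ip2 p q)).
Proof. by rewrite /ip2 cJD !cJM !conjCK [_ * p false]mulrC [_ * p true]mulrC. Qed.

Lemma ip2_C0 (p q T : bool -> C) : ip2 p q = 0 ->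
  (exists b, p b != 0) -> (exists b, q b != 0) ->
  ip2 p T = 0 -> ip2 q T = 0 -> T false = 0 /\ T true = 0.
Proof.
rewrite /ip2 => E1 Hp [b Hq] E2 E3.
set e := p false * q true - p true * q false.
set np := (Num.conj (p false)) * p false + (Num.conj (p true)) * p true.
have np0 : np != 0 by have := ip2_self_neq0 Hp.
have H0 : np * q false = p false * ((Num.conj (p false)) * q false + (Num.conj (p true)) * q true) - (Num.conj (p true)) * e.
  rewrite /np /e; ring.
have H1 : np * q true = p true * ((Num.conj (p false)) * q false + (Num.conj (p true)) * q true) + (Num.conj (p false)) * e.
  rewrite /np /e; ring.
have e0 : e != 0.
  apply/negP => /eqP e0; move: H0 H1; rewrite E1 e0 !mulr0 subr0 addr0.
  move=> /eqP; rewrite mulf_eq0 (negbTE np0) /= => /eqP q0.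
  move=> /eqP; rewrite mulf_eq0 (negbTE np0) /= => /eqP q1.
  by case: b Hq; rewrite ?q0 ?q1 eqxx.
have d0 : (Num.conj e) != 0 by rewrite conjC_eq0.
have Ht0 : (Num.conj e) * T false = (Num.conj (q true)) * ((Num.conj (p false)) * T false + (Num.conj (p true)) * T true)
   - (Num.conj (p true)) * ((Num.conj (q false)) * T false + (Num.conj (q true)) * T true).
  rewrite /e cJB !cJM; ring.
have Ht1 : (Num.conj e) * T true = - (Num.conj (q false)) * ((Num.conj (p false)) * T false + (Num.conj (p true)) * T true)
   + (Num.conj (p false)) * ((Num.conj (q false)) * T false + (Num.conj (q true)) * T true).
  rewrite /e cJB !cJM; ring.
rewrite E2 E3 !mulr0 subr0 addr0 in Ht0 Ht1.
split; apply/eqP; move: Ht0 Ht1 => /eqP + /eqP; rewrite !mulf_eq0 (negbTE d0) //.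
Qed.


Lemma ip2_C1 (p q r : bool -> C) : ip2 p q = 0 -> ip2 p r = 0 ->
  (exists b, p b != 0) -> (exists b, q b != 0) ->
  exists mu, forall b, r b = mu * q b.
Proof.
move=> Hq Hr Hp Hq0.
pose mu := ip2 q r / ip2 q q.
have qq := ip2_self_neq0 Hq0.
have E1 : ip2 p (fun b => r b - mu * q b) = ip2 p r - mu * ip2 p q by rewrite /ip2; ring.
have E2 : ip2 q (fun b => r b - mu * q b) = ip2 q r - mu * ip2 q q by rewrite /ip2; ring.
rewrite Hq Hr mulr0 subr0 in E1.
rewrite /mu divfK // subrr in E2.
have [T0 T1] := @ip2_C0 p q (fun b => r b - mu * q b) Hq Hp Hq0 E1 E2.
by exists mu => -[]; apply/eqP; rewrite -subr_eq0; apply/eqP.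
Qed.

Lemma ip2_scaleR (s q r : bool -> C) mu : (forall b, r b = mu * q b) ->
  ip2 s r = mu * ip2 s q.
Proof. by move=> H; rewrite /ip2 !H; ring. Qed.

Lemma ip2_scaleL (s q r : bool -> C) mu : (forall b, r b = mu * q b) ->
  ip2 r s = Num.conj mu * ip2 q s.
Proof. by move=> H; rewrite /ip2 !H !cJM; ring. Qed.

Section Inner.
Variable N : nat.
Implicit Types f g h : vec R N.

Lemma inner_self_neq0 f : (exists x, f x != 0) -> inner f f != 0.
Proof.
case=> x Hx; rewrite /inner psumr_eq0 => [|y _]; last exact: cJ_ge0.
apply/allPn; exists x; first exact: mem_index_enum.
by rewrite /= cJ_eq0.
Qed.

Lemma inner_conj f g : inner g f = Num.conj (inner f g).
Proof. by rewrite /inner cJsum; apply: eq_bigr => x _; rewrite cJM conjCK mulrC. Qed.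

Lemma inner_eqR f g g' : (forall x, g x = g' x) -> inner f g = inner f g'.
Proof. by move=> H; apply: eq_bigr => x _; rewrite H. Qed.

Lemma inner_eqL f f' g : (forall x, f x = f' x) -> inner f g = inner f' g.
Proof. by move=> H; apply: eq_bigr => x _; rewrite H. Qed.

Lemma inner_addR f g h : inner f (fun x => g x + h x) = inner f g + inner f h.
Proof. by rewrite /inner -big_split; apply: eq_bigr => x _; rewrite mulrDr. Qed.

Lemma inner_lin m (P : pred 'I_m) (c : 'I_m -> C) (h : 'I_m -> vec R N) f g :
  inner f (fun x => g x - \sum_(k | P k) c k * h k x) =
  inner f g - \sum_(k | P k) c k * inner f (h k).
Proof.
rewrite /inner.
transitivity (\sum_x (Num.conj (f x) * g x) -
   \sum_x \sum_(k | P k) (c k * (Num.conj (f x) * h k x))).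
  rewrite -sumrB; apply: eq_bigr => x _; rewrite mulrBr mulr_sumr; congr (_ - _).
  by apply: eq_bigr => k _; ring.
by rewrite exchange_big; congr (_ - _); apply: eq_bigr => k _; rewrite mulr_sumr.
Qed.

Lemma inner_linL m (P : pred 'I_m) (c : 'I_m -> C) (h : 'I_m -> vec R N) g :
  inner (fun x => \sum_(k | P k) c k * h k x) g =
  \sum_(k | P k) Num.conj (c k) * inner (h k) g.
Proof.
rewrite /inner.
transitivity (\sum_x \sum_(k | P k) (Num.conj (c k) * (Num.conj (h k x) * g x))).
  apply: eq_bigr => x _; rewrite cJsum mulr_suml; apply: eq_bigr => k _.
  by rewrite cJM; ring.
by rewrite exchange_big; apply: eq_bigr => k _; rewrite mulr_sumr.
Qed.

End Inner.


Section Bip.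
Variable n : nat.
Local Notation T := (basis_idx n.+1).
Local Notation V := (vec R n.+1).

Definition D (g : V) := depends_only_on (~: [set ord0]) g.
Definition setb (x : T) (b : bool) : T := [ffun i => if i == ord0 then b else x i].
Definition prodv (al : bool -> C) (be : V) : V := fun x => al (x ord0) * be x.

Lemma D_setb g : D g -> forall x b, g (setb x b) = g x.
Proof.
move=> Dg x b; apply: Dg => i; rewrite in_setC in_set1 ffunE => /negbTE -> //.
Qed.

Lemma setb_id x : setb x (x ord0) = x.
Proof. by apply/ffunP => i; rewrite ffunE; case: eqP => // ->. Qed.

Lemma setb_0 x b : setb x b ord0 = b.
Proof. by rewrite ffunE eqxx. Qed.

Lemma setb_setb x b c : setb (setb x b) c = setb x c.
Proof. by apply/ffunP => i; rewrite !ffunE; case: eqP. Qed.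

Lemma flip_inv : involutive (fun x => setb x (~~ x ord0)).
Proof. by move=> x; rewrite setb_setb setb_0 negbK setb_id. Qed.

Lemma sumL (f : bool -> C) (g : V) : D g ->
  2 * \sum_(x : T) f (x ord0) * g x = (f false + f true) * \sum_(x : T) g x.
Proof.
move=> Dg.
have E : \sum_(x : T) f (x ord0) * g x = \sum_(x : T) f (~~ x ord0) * g x.
  rewrite (reindex_inj (inv_inj flip_inv)) /=.
  by apply: eq_bigr => x _; rewrite setb_0 D_setb.
have -> : 2 * \sum_(x : T) f (x ord0) * g x =
   \sum_(x : T) f (x ord0) * g x + \sum_(x : T) f (x ord0) * g x by ring.
rewrite {2}E -big_split mulr_sumr; apply: eq_bigr => x _.
by case: (x ord0) => /=; ring.
Qed.

Lemma D_conjmul (g h : V) : D g -> D h -> D (fun x => Num.conj (g x) * h x).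
Proof. by move=> Dg Dh x y H /=; rewrite (Dg x y H) (Dh x y H). Qed.

Lemma inner_prodv A B al be : D B -> D be ->
  2 * inner (prodv A B) (prodv al be) = ip2 A al * inner B be.
Proof.
move=> DB Dbe; rewrite /inner /prodv.
rewrite (eq_bigr (fun x : T => (fun b => Num.conj (A b) * al b) (x ord0) *
   (fun x : T => Num.conj (B x) * be x) x)); last by move=> x _; rewrite cJM; ring.
exact: (sumL (fun b => Num.conj (A b) * al b) (D_conjmul DB Dbe)).
Qed.


Lemma D_setbv (w : V) b : D (fun x => w (setb x b)).
Proof.
move=> x y H; congr w; apply/ffunP => i; rewrite !ffunE.
by case: eqP => // /eqP Hi; apply: H; rewrite in_setC in_set1.
Qed.

Lemma main_i (m : nat) (A : 'I_m -> bool -> C) (B : 'I_m -> V) :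
  (forall k, D (B k)) -> (forall k, exists b, A k b != 0) ->
  (forall k, exists x, B k x != 0) ->
  (forall k l, k != l -> ip2 (A k) (A l) * inner (B k) (B l) = 0) ->
  forall w : V, (exists x, w x != 0) ->
  (forall k, inner (prodv (A k) (B k)) w = 0) ->
  exists (al : bool -> C) (be : V), [/\ (exists b, al b != 0), (exists x, be x != 0),
     D be & forall k, ip2 (A k) al * inner (B k) be = 0].
Proof.
move=> DB HA HB Horth w Hw Hwo.
have orth k l : k != l -> ip2 (A k) (A l) != 0 -> inner (B k) (B l) = 0.
  move=> kl /negbTE H; move: (Horth k l kl) => /eqP.
  by rewrite mulf_eq0 H /= => /eqP.
have Bnz k : inner (B k) (B k) != 0 by apply: inner_self_neq0.
have par l j k : ip2 (A j) (A l) = 0 -> ip2 (A k) (A l) = 0 ->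
    exists2 mu, mu != 0 & forall b, A k b = mu * A j b.
  move=> Hj Hk.
  have [mu Hmu] : exists mu, forall b, A k b = mu * A j b.
    apply: (@ip2_C1 (A l)) => //.
    - by rewrite ip2_conj Hj conjC0.
    - by rewrite ip2_conj Hk conjC0.
  exists mu => //; apply/negP => /eqP mu0.
  by case: (HA k) => b; rewrite Hmu mu0 mul0r eqxx.
case: (classic (exists k, forall l, ip2 (A l) (A k) != 0)) => [[k Hk] | Hn0].
  exists (fun b => if b then Num.conj (A k false) else - Num.conj (A k true)), (B k).
  split; [|exact: HB|exact: DB|].
  - by case: (HA k) => -[] Hb; [exists false | exists true];
      rewrite ?oppr_eq0 conjC_eq0.
  - move=> k'; case: (eqVneq k' k) => [->|kk'].
      by rewrite /ip2 /= (_ : forall a b : C, a * - b + b * a = 0) ?mul0r // => a b; ring.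
    by rewrite (orth k' k kk' (Hk k')) mulr0.
have Hex k : exists l, ip2 (A l) (A k) = 0.
  apply: NNPP => H; apply: Hn0; exists k => l; apply/eqP => E; apply: H; by exists l.
pose coef l k := inner (B k) (B l) / inner (B k) (B k).
pose beta l x := B l x - \sum_(k | ip2 (A k) (A l) == 0) coef l k * B k x.
have Dbeta l : D (beta l).
  move=> x y H; rewrite /beta (DB l x y H); congr (_ - _).
  by apply: eq_bigr => k _; rewrite (DB k x y H).
case: (classic (exists l j, ip2 (A j) (A l) = 0 /\ exists x, beta l x != 0))
  => [[l [j [Hjl Hbx]]] | Hn1].
  exists (A j), (beta l); split; [exact: HA | exact: Hbx | exact: Dbeta |].
  move=> k'; have [->|Hk'j] := eqVneq (ip2 (A k') (A j)) 0; first by rewrite mul0r.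
  apply/eqP; rewrite mulf_eq0 (negbTE Hk'j) /=; apply/eqP.
  rewrite /beta inner_lin.
  have Hz k : ip2 (A k) (A l) == 0 -> k != k' -> inner (B k') (B k) = 0.
    move=> /eqP Hk kk'; apply: orth; first by rewrite eq_sym.
    have [mu mu0 Hmu] := par l j k Hjl Hk.
    by rewrite (ip2_scaleR _ Hmu) mulf_neq0.
  have [Hk'l|Hk'l] := eqVneq (ip2 (A k') (A l)) 0.
  - rewrite (bigD1 k') ?Hk'l ?eqxx //= big1 ?addr0; last first.
      by move=> k /andP[Hk kk']; rewrite Hz ?mulr0.
    by rewrite /coef divfK // subrr.
  - rewrite big1 ?subr0; last first.
      move=> k Hk; rewrite Hz ?mulr0 //.
      by apply: contraNneq Hk'l => <-.
    apply: orth => //; apply/eqP => E; move: Hk'j; rewrite E ip2_conj Hjl conjC0.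
    by rewrite eqxx.
have Hb0 l j : ip2 (A j) (A l) = 0 -> forall x, beta l x = 0.
  move=> H x; apply: NNPP => Hx; apply: Hn1; exists l, j; split => //.
  by exists x; apply/eqP.
case: Hw => x0 Hx0.
pose be i := fun x => w (setb x i).
pose Vv k i := inner (B k) (be i).
have Dbe i : D (be i) by apply: D_setbv.
have W k : ip2 (A k) (Vv k) = 0.
  have := Hwo k.
  rewrite (inner_eqR _ (g' := fun x => prodv (fun b => (b == false)%:R) (be false) x
     + prodv (fun b => (b == true)%:R) (be true) x)); last first.
    move=> x; rewrite /prodv /be; case: (x ord0) (setb_id x) => /= ->; ring.
  rewrite inner_addR => /(congr1 (fun t => 2 * t)).
  rewrite mulrDr !inner_prodv // mulr0 /ip2 /Vv /=.
  move=> <-; ring.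
have V0 k : Vv k false = 0 /\ Vv k true = 0.
  case: (Hex k) => l Hl.
  have Bk x : B k x = \sum_(k' | ip2 (A k') (A k) == 0) coef k k' * B k' x.
    by apply/eqP; rewrite -subr_eq0; apply/eqP; apply: (Hb0 k l Hl).
  have Vk i : Vv k i = \sum_(k' | ip2 (A k') (A k) == 0) Num.conj (coef k k') * Vv k' i.
    by rewrite /Vv (inner_eqL _ Bk) inner_linL.
  have Wl : ip2 (A l) (Vv k) = 0.
    have -> : ip2 (A l) (Vv k) = \sum_(k' | ip2 (A k') (A k) == 0)
        Num.conj (coef k k') * ip2 (A l) (Vv k').
      rewrite /ip2 !Vk !mulr_sumr -big_split; apply: eq_bigr => kk _ /=; ring.
    apply: big1 => k' /eqP Hk'.
    have [mu _ Hmu] := par k k' l Hk' Hl.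
    by rewrite (ip2_scaleL _ Hmu) W !mulr0.
  apply: (@ip2_C0 (A k) (A l)) => //.
  by rewrite ip2_conj Hl conjC0.
exists (fun b => (b == x0 ord0)%:R), (be (x0 ord0)); split.
- by exists (x0 ord0); rewrite eqxx oner_eq0.
- by exists x0; rewrite /be setb_id.
- exact: Dbe.
- move=> k; case: (V0 k); rewrite /Vv => Vf Vt.
  by case: (x0 ord0); rewrite ?Vf ?Vt mulr0.
Qed.


Lemma part_i (n0 : (0 < n)%N) m (u : 'I_m -> V) :
  UPB u -> unextendible_every_bipartition u -> False.
Proof.
case=> Hfp Horth [v Hv] _ Hunext.
have Ha k : {a : 'I_n.+1 -> bool -> C | forall x, u k x = \prod_(i < n.+1) a i (x i)}.
  by apply: constructive_indefinite_description; case: (Hfp k).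
pose a k := sval (Ha k).
pose A k := fun b => a k ord0 b.
pose B k : V := fun x => \prod_(i < n.+1 | i != ord0) a k i (x i).
have uE k x : u k x = prodv (A k) (B k) x.
  by rewrite (svalP (Ha k)) /prodv (bigD1 ord0).
have DB k : D (B k).
  by move=> x y H; apply: eq_bigr => i Hi; rewrite H // in_setC in_set1.
have unz k : exists x, u k x != 0 by case: (Hfp k) => -[x Hx] _; exists x.
have HA k : exists b, A k b != 0.
  by case: (unz k) => x; rewrite uE /prodv mulf_eq0 negb_or => /andP[H1 H2]; exists (x ord0).
have HB k : exists x, B k x != 0.
  by case: (unz k) => x; rewrite uE /prodv mulf_eq0 negb_or => /andP[H1 H2]; exists x.
have Horth' k l : k != l -> ip2 (A k) (A l) * inner (B k) (B l) = 0.
  move=> kl; rewrite -inner_prodv // -(inner_eqL _ (uE k)) -(inner_eqR _ (uE l)).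
  by have := Horth k l kl; rewrite /orthogonal => ->; rewrite mulr0.
have unn k : inner (u k) (u k) != 0 by apply: inner_self_neq0.
pose w x := v x - \sum_(k < m) (inner (u k) v / inner (u k) (u k)) * u k x.
have Hw : exists x, w x != 0.
  apply: NNPP => H; apply: Hv; exists (fun k => inner (u k) v / inner (u k) (u k)) => x.
  apply/eqP; rewrite -subr_eq0; apply/eqP; apply: NNPP => Hx; apply: H; exists x; exact/eqP.
have Hwo k : inner (u k) w = 0.
  rewrite /w inner_lin (bigD1 k) //= big1 ?addr0 ?divfK ?subrr //.
  move=> k' kk'; have := Horth k k'; rewrite eq_sym => /(_ kk').
  by rewrite /orthogonal => ->; rewrite mulr0.
have Hwo' k : inner (prodv (A k) (B k)) w = 0 by rewrite -(inner_eqL _ (uE k)).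
have [al [be [[b Hb] [x Hx] Dbe Hab]]] := main_i DB HA HB Horth' Hw Hwo'.
apply: (Hunext [set ord0] _ (prodv al be)).
- split; first by apply/set0Pn; exists ord0; rewrite in_set1.
  apply/negP => /eqP E.
  have := in_setT (ord_max : 'I_n.+1); rewrite -E in_set1 => /eqP /(congr1 val) /= n0e.
  by rewrite n0e in n0.
- move=> k; rewrite /Defs.orthogonal (inner_eqL _ (uE k)).
  have := inner_prodv (A k) al (DB k) Dbe; rewrite Hab => /eqP.
  by rewrite mulf_eq0 pnatr_eq0 /= => /eqP.
- split; first by exists (setb x b); rewrite /prodv setb_0 D_setb // mulf_neq0.
  exists (fun x => al (x ord0)), be; split => //.
  by move=> y z H; rewrite H // in_set1.
Qed.

End Bip.


Lemma mix_lemma N (S : {set 'I_N}) (v : vec R N) (p q : basis_idx N) :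
  product_wrt S v -> v p != 0 -> v q != 0 ->
  v [ffun i => if i \in S then p i else q i] != 0.
Proof.
case=> _ [a [b [Da [Db Hv]]]]; rewrite !Hv !mulf_eq0 !negb_or.
move=> /andP[ap bp] /andP[aq bq].
rewrite (Da _ p) ?(Db _ q) ?ap ?bq //.
- by move=> i; rewrite in_setC ffunE => /negbTE ->.
- by move=> i Hi; rewrite ffunE Hi.
Qed.

Lemma fully_wrt N (S : {set 'I_N}) (v : vec R N) : fully_product v -> product_wrt S v.
Proof.
case=> Hnz [a Ha]; split => //.
exists (fun x => \prod_(i in S) a i (x i)), (fun x => \prod_(i in ~: S) a i (x i)).
split; [|split].
- by move=> x y H; apply: eq_bigr => i Hi; rewrite H.
- by move=> x y H; apply: eq_bigr => i Hi; rewrite H.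
- move=> x; rewrite Ha (bigID (fun i => i \in S)) /=; congr (_ * _).
  by apply: eq_bigl => i; rewrite in_setC.
Qed.

Lemma sum_delta N (a : basis_idx N) (g : vec R N) :
  \sum_(z : basis_idx N) (z == a)%:R * g z = g a.
Proof.
rewrite (bigD1 a) //= eqxx mul1r big1 ?addr0 // => z /negbTE ->.
by rewrite mul0r.
Qed.

Lemma inner_st N (a b e : basis_idx N) (c d : C) (g : vec R N) :
  inner (fun z => (z == a)%:R + c * (z == b)%:R + d * (z == e)%:R) g =
  g a + Num.conj c * g b + Num.conj d * g e.
Proof.
rewrite /inner.
rewrite (eq_bigr (fun z => ((z == a)%:R * g z + Num.conj c * ((z == b)%:R * g z))
   + Num.conj d * ((z == e)%:R * g z))); last first.
  by move=> z _; rewrite !cJD !cJM !cJn; ring.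
by rewrite !big_split /= -!mulr_sumr !sum_delta.
Qed.

Section Constr.
Variable n : nat.
Local Notation T := (basis_idx n.+2).
Local Notation V := (vec R n.+2).

Definition one : T := [ffun _ => true].
Definition zer : T := [ffun _ => false].
Definition cmp (x : T) : T := [ffun i => ~~ x i].
Definition i1 : 'I_n.+2 := @Ordinal n.+2 1 isT.
Definition yv : T := [ffun i : 'I_n.+2 => i == i1].
Definition rep (x : T) : T := if x == one then yv else if x ord0 then cmp x else x.
Definition c2 (x : T) : C := if x == one then 1 else if x == yv then 1 else if x ord0 then -1 else 1.
Definition c3 (x : T) : C := if x == one then -2 else if x == yv then 1 else 0.
Definition U (x : T) : V := fun z =>
  (z == rep x)%:R + c2 x * (z == cmp (rep x))%:R + c3 x * (z == one)%:R.

Lemma cmpK : involutive cmp.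
Proof. by move=> x; apply/ffunP => i; rewrite !ffunE negbK. Qed.

Lemma cmp_inj : injective cmp. Proof. exact: inv_inj cmpK. Qed.

Lemma bit0_neq (a b : T) : a ord0 != b ord0 -> a != b.
Proof. by apply: contraNneq => ->. Qed.

Lemma one0 : one ord0 = true. Proof. by rewrite ffunE. Qed.
Lemma zer0 : zer ord0 = false. Proof. by rewrite ffunE. Qed.
Lemma yv0 : yv ord0 = false. Proof. by rewrite ffunE. Qed.
Lemma cmp0 x : cmp x ord0 = ~~ x ord0. Proof. by rewrite ffunE. Qed.

Lemma cmp_one : cmp one = zer. Proof. by apply/ffunP => i; rewrite !ffunE. Qed.

Lemma cmp_eq_one x : (cmp x == one) = (x == zer).
Proof. by apply/eqP/eqP => [H|->]; [rewrite -(cmpK x) H cmp_one | apply/ffunP => i; rewrite !ffunE]. Qed.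

Lemma yv_nz : yv != zer.
Proof.
by apply/negP => /eqP /(congr1 (fun f : T => f i1)); rewrite !ffunE eqxx.
Qed.

Lemma rep0 x : x != zer -> rep x ord0 = false.
Proof.
move=> Hx; rewrite /rep; case: ifP => _; first exact: yv0.
by case: ifP => H; rewrite ?cmp0 ?H.
Qed.

Lemma rep_nz x : x != zer -> rep x != zer.
Proof.
move=> Hx; rewrite /rep; case: ifP => H1; first exact: yv_nz.
case: ifP => H; rewrite //.
apply/negP => /eqP E; move: H1; rewrite -(cmpK x) E.
have -> : cmp zer = one by apply/ffunP => i; rewrite !ffunE.
by rewrite eqxx.
Qed.

Lemma spec x : x != zer ->
  [\/ [/\ x = one, rep x = yv, c2 x = 1 & c3 x = -2],
      [/\ x = yv, rep x = yv, c2 x = 1 & c3 x = 1],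
      [/\ x = cmp (rep x), rep x ord0 = false, c2 x = -1 & c3 x = 0] |
      [/\ x = rep x, rep x != yv, c2 x = 1 & c3 x = 0]].
Proof.
move=> Hx; have r0 := rep0 Hx; move: r0; rewrite /rep /c2 /c3.
case: (x =P one) => [->|H1]; first by constructor 1.
case: (x =P yv) => [->|H2]; first by rewrite yv0; constructor 2.
case: ifP => H3 r0; first by constructor 3; rewrite ?cmpK.
constructor 4.
by split => //; apply/eqP.
Qed.

Lemma c2J x : Num.conj (c2 x) = c2 x.
Proof. by rewrite /c2; do 3?case: ifP => _; rewrite ?cJN cJ1. Qed.

Lemma c3J x : Num.conj (c3 x) = c3 x.
Proof.
rewrite /c3; do 2?case: ifP => _; rewrite ?cJN ?cJ1 ?cJ0 //.
by rewrite cJn.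
Qed.

Lemma c2_nz x : c2 x != 0.
Proof. by rewrite /c2; do 3?case: ifP => _; rewrite ?oppr_eq0 oner_eq0. Qed.

Lemma inner_U x g : inner (U x) g = g (rep x) + c2 x * g (cmp (rep x)) + c3 x * g one.
Proof. by rewrite /U inner_st c2J c3J. Qed.

Lemma U_r x x' : x != zer -> x' != zer -> U x' (rep x) = (rep x == rep x')%:R.
Proof.
move=> Hx Hx'; rewrite /U.
rewrite (negbTE (@bit0_neq (rep x) (cmp (rep x')) _)); last by rewrite cmp0 !rep0.
rewrite (negbTE (@bit0_neq (rep x) one _)); last by rewrite one0 !rep0.
by rewrite !mulr0 !addr0.
Qed.

Lemma U_cr x x' : x != zer -> x' != zer -> U x' (cmp (rep x)) = c2 x' * (rep x == rep x')%:R.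
Proof.
move=> Hx Hx'; rewrite /U (inj_eq cmp_inj) cmp_eq_one (negbTE (rep_nz Hx)).
rewrite (negbTE (@bit0_neq (cmp (rep x)) (rep x') _)); last by rewrite cmp0 !rep0.
by rewrite !mulr0 !addr0 add0r.
Qed.

Lemma U_one x' : x' != zer -> U x' one = c3 x'.
Proof.
move=> Hx'; rewrite /U eqxx mulr1 (negbTE (@bit0_neq one (rep x') _)); last by rewrite one0 rep0.
by rewrite [one == _]eq_sym cmp_eq_one (negbTE (rep_nz Hx')) mulr0 !add0r.
Qed.

Lemma U_zer x' : x' != zer -> U x' zer = 0.
Proof.
move=> Hx'; rewrite /U eq_sym (negbTE (rep_nz Hx')).
rewrite (negbTE (@bit0_neq zer (cmp (rep x')) _)); last by rewrite zer0 cmp0 rep0.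
rewrite (negbTE (@bit0_neq zer one _)); last by rewrite zer0 one0.
by rewrite !mulr0 !addr0.
Qed.

Lemma U_orth x x' : x != zer -> x' != zer -> x != x' -> inner (U x) (U x') = 0.
Proof.
move=> Hx Hx' Hxx'; rewrite inner_U U_r // U_cr // U_one //.
have [Er|Er] := eqVneq (rep x) (rep x'); rewrite ?eqxx ?(negbTE Er) /=;
 case: (spec Hx) => -[E1 E2 E3 E4]; case: (spec Hx') => -[F1 F2 F3 F4];
   rewrite ?E3 ?E4 ?F3 ?F4; first [ring | idtac].
all: exfalso; first [ by move: Hxx'; rewrite E1 F1 ?Er eqxx | by move: F2; rewrite -Er E2 eqxx
   | by move: E2; rewrite Er F2 eqxx | by move: Er; rewrite E2 F2 eqxx ].
Qed.


Lemma cmp_eq_zer x : (cmp x == zer) = (x == one).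
Proof. by rewrite -cmp_eq_one cmpK. Qed.

Lemma lab_f x : x != one -> x != yv -> x ord0 = false ->
  [/\ rep x = x, c2 x = 1 & c3 x = 0].
Proof. by move=> /negbTE H1 /negbTE H2 H3; rewrite /rep /c2 /c3 H1 H2 H3. Qed.

Lemma lab_t x : x != one -> x ord0 = true ->
  [/\ rep x = cmp x, c2 x = -1 & c3 x = 0].
Proof.
move=> /negbTE H1 H3.
have /negbTE H2 : x != yv by apply: bit0_neq; rewrite H3 yv0.
by rewrite /rep /c2 /c3 H1 H2 H3.
Qed.

Lemma two_eq0 (a : C) : 2 * a = 0 -> a = 0.
Proof. by move/eqP; rewrite mulf_eq0 pnatr_eq0 /= => /eqP. Qed.

Lemma compl (w : V) : (forall x, x != zer -> inner (U x) w = 0) ->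
  forall z, z != zer -> w z = 0.
Proof.
move=> H.
have L x : x != zer -> w (rep x) + c2 x * w (cmp (rep x)) + c3 x * w one = 0.
  by move=> Hx; rewrite -inner_U H.
have one_nz : one != zer by apply: bit0_neq; rewrite one0 zer0.
have yv_one : yv != one by apply: bit0_neq; rewrite one0 yv0.
have cy_nz : cmp yv != zer by apply: bit0_neq; rewrite cmp0 zer0 yv0.
have cy_one : cmp yv != one by rewrite cmp_eq_one yv_nz.
have Eone := L one one_nz; rewrite /rep /c2 /c3 eqxx in Eone.
have Ey := L yv yv_nz; rewrite /rep /c2 /c3 (negbTE yv_one) eqxx yv0 in Ey.
have [t1 t2 t3] := lab_t cy_one (etrans (cmp0 yv) (congr1 negb yv0)).
have Ecy := L _ cy_nz; rewrite t1 t2 t3 cmpK in Ecy.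
set a := w yv in Eone Ey Ecy; set b := w (cmp yv) in Eone Ey Ecy.
set c := w one in Eone Ey Ecy.
have c0 : c = 0.
  have : 3 * c = (a + 1 * b + 1 * c) - (a + 1 * b + -2 * c) by ring.
  by rewrite Ey Eone subrr => /eqP; rewrite mulf_eq0 pnatr_eq0 /= => /eqP.
rewrite c0 mulr0 addr0 mul1r in Ey; rewrite mul0r addr0 in Ecy.
have a0 : a = 0.
  apply: two_eq0; rewrite (_ : 2 * a = (a + b) + (a + -1 * b)).
    by rewrite Ey Ecy addr0.
  rewrite /a /b; ring.
have b0 : b = 0.
  apply: two_eq0; rewrite (_ : 2 * b = (a + b) - (a + -1 * b)).
    by rewrite Ey Ecy subr0.
  rewrite /a /b; ring.
move=> z Hz.
have [->|z1] := eqVneq z one; first exact: c0.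
have [->|z2] := eqVneq z yv; first exact: a0.
have [->|z3] := eqVneq z (cmp yv); first exact: b0.
pose r := if z ord0 then cmp z else z.
have r0 : r ord0 = false by rewrite /r; case: ifP => H0; rewrite ?cmp0 H0.
have rz : r != zer.
  by rewrite /r; case: ifP => _ //; rewrite cmp_eq_zer.
have ro : r != one by apply: bit0_neq; rewrite r0 one0.
have ry : r != yv.
  rewrite /r; case: ifP => _ //.
  by apply/negP => /eqP E; move: z3; rewrite -E cmpK eqxx.
have [q1 q2 q3] := lab_f ro ry r0.
have E1 := L _ rz; rewrite q1 q2 q3 mul0r addr0 mul1r in E1.
have cro : cmp r != one by rewrite cmp_eq_one.
have crz : cmp r != zer by rewrite cmp_eq_zer.
have [p1 p2 p3] := lab_t cro (etrans (cmp0 r) (congr1 negb r0)).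
have E2 := L _ crz; rewrite p1 p2 p3 cmpK mul0r addr0 in E2.
have wr : w r = 0.
  apply: two_eq0; rewrite (_ : 2 * w r = (w r + w (cmp r)) + (w r + -1 * w (cmp r))).
    by rewrite E1 E2 addr0.
  ring.
have wcr : w (cmp r) = 0.
  apply: two_eq0; rewrite (_ : 2 * w (cmp r) = (w r + w (cmp r)) - (w r + -1 * w (cmp r))).
    by rewrite E1 E2 subr0.
  ring.
move: wr wcr; rewrite /r; case: ifP => _ //; by rewrite cmpK.
Qed.

Lemma U_GME x : x != zer -> GME (U x).
Proof.
move=> Hx.
have Ur : U x (rep x) = 1 by rewrite U_r // eqxx.
have Ucr : U x (cmp (rep x)) = c2 x by rewrite U_cr // eqxx mulr1.
have Ur0 : U x (rep x) != 0 by rewrite Ur oner_eq0.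
have Ucr0 : U x (cmp (rep x)) != 0 by rewrite Ucr c2_nz.
split; first by exists (rep x).
move=> S [S0 ST] Hp.
case/set0Pn: S0 => i Hi.
have [j Hj] : exists j, j \notin S.
  apply: NNPP => H; move/negP: ST; apply; apply/eqP/setP => k; rewrite in_setT.
  apply: NNPP => Hk; apply: H; exists k; exact/negP.
have Uo z : z != rep x -> z != cmp (rep x) -> U x z = c3 x * (z == one)%:R.
  by move=> H1 H2; rewrite /U (negbTE H1) (negbTE H2) mulr0 !add0r.
have n1 := mix_lemma Hp Ur0 Ucr0.
have n2 := mix_lemma Hp Ucr0 Ur0.
rewrite Uo in n1; first last.
- apply/negP => /eqP /(congr1 (fun f : T => f i)); rewrite !ffunE Hi.
  by case: (rep x i).
- apply/negP => /eqP /(congr1 (fun f : T => f j)); rewrite !ffunE (negbTE Hj).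
  by case: (rep x j).
rewrite Uo in n2; first last.
- apply/negP => /eqP /(congr1 (fun f : T => f j)); rewrite !ffunE (negbTE Hj).
  by case: (rep x j).
- apply/negP => /eqP /(congr1 (fun f : T => f i)); rewrite !ffunE Hi.
  by case: (rep x i).
have natb (c : C) (bb : bool) : c * bb%:R != 0 -> bb.
  by case: bb => //; rewrite mulr0 eqxx.
move/natb/eqP: n1 => E1; move/natb/eqP: n2 => E2.
move: (congr1 (fun f : T => f i) E1) (congr1 (fun f : T => f i) E2).
by rewrite !ffunE Hi; case: (rep x i).
Qed.

Lemma delta_fully (w : V) : (forall z, z != zer -> w z = 0) ->
  (exists x, w x != 0) -> fully_product w.
Proof.
move=> H Hnz; split => //.
exists (fun i b => if b then 0 else (if i == ord0 then w zer else 1)) => x.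
have [->|Hx] := eqVneq x zer.
- rewrite (bigD1 ord0) //= big1 ?mulr1; first by rewrite ffunE ?eqxx.
  by move=> i /negbTE Hi; rewrite ffunE Hi.
- rewrite H //.
  have [i Hi] : exists i, x i.
    apply: NNPP => Hn; move/negP: Hx; apply; apply/eqP/ffunP => i.
    rewrite ffunE; apply/negbTE/negP => Hi; apply: Hn; by exists i.
  by rewrite (bigD1 i) //= Hi mul0r.
Qed.

Lemma part_ii : exists (m : nat) (u : 'I_m -> V),
  [/\ UEB u, forall k, GME (u k) & UEB_conserved_every_bipartition u].
Proof.
pose Aset := [set x : T | x != zer].
have one_in : one \in Aset by rewrite inE; apply: bit0_neq; rewrite one0 zer0.
exists #|Aset|, (fun k => U (enum_val k)).
have valnz (k : 'I_#|Aset|) : enum_val k != zer.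
  by move: (enum_valP k); rewrite in_set.
have S0 : bipartition [set ord0 : 'I_n.+2].
  split; first by apply/set0Pn; exists ord0; rewrite in_set1.
  apply/negP => /eqP E; have := in_setT i1; rewrite -E in_set1 => /eqP /(congr1 val).
  by [].
have gme k := U_GME (valnz k).
have compl' w : in_complement (fun k : 'I_#|Aset| => U (enum_val k)) w -> forall z, z != zer -> w z = 0.
  move=> Hw; apply: compl => x Hx.
  have Hx' : x \in Aset by rewrite inE.
  by have := Hw (enum_rank_in one_in x); rewrite enum_rankK_in.
have fullw w : in_complement (fun k : 'I_#|Aset| => U (enum_val k)) w -> nonzero w -> fully_product w.
  by move=> Hw Hnz; apply: delta_fully => //; apply: compl'.
split; [split|exact: gme|].
- move=> k; split; first by case: (gme k).
  by move=> Hf; case: (gme k) => _ H; exact: (H _ S0 (fully_wrt _ Hf)).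
- move=> k l kl; apply: U_orth => //; apply: contra kl => /eqP E; apply/eqP.
  exact: enum_val_inj.
- exists (fun z => (z == zer)%:R) => -[c Hc]; move: (Hc zer); rewrite eqxx /= big1.
    by move/eqP; rewrite oner_eq0.
  by move=> k _; rewrite U_zer ?mulr0.
- by move=> w Hw [Hnz Hnf]; apply: Hnf; apply: fullw.
- by move=> S HS w Hw [Hnz Hnp]; apply: Hnp; apply: fully_wrt; apply: fullw.
Qed.

End Constr.

End Gen.

Theorem proposition4 (R : realType) :
  (forall N : nat, (2 <= N)%N ->
     ~ exists (m : nat) (u : 'I_m -> vec R N),
         UPB u /\ unextendible_every_bipartition u) /\
  (forall N : nat, (3 <= N)%N ->
     exists (m : nat) (u : 'I_m -> vec R N),
       [/\ UEB u, forall k, GME (u k) & UEB_conserved_every_bipartition u]).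
Proof.
split.
- move=> N HN [m [u [Hu Hue]]].
  case: N HN u Hu Hue => [|[|n]] // _ u Hu Hue.
  exact: (@part_i R n.+1 isT m u Hu Hue).
- move=> N; case: N => [|[|n]] // _.
  exact: part_ii.
Qed.
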